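(* Assume $\mathcal{Z}$ is norm-Euclidean. Then for every $m\ge1$, $\sigma(m):=\sup_{|s|=m}\operatorname{diam}C_s\le2\operatorname{rad}(K)^{2m+1}$; in particular $\sigma(m)\to0$ as $m\to\infty$.
   Context: $X=\mathbb{R}^d$ (including $\mathbb{C},\mathbb{H},\mathbb{O}$ as $\mathbb{R}^2,\mathbb{R}^4,\mathbb{R}^8$) with Euclidean norm and distance $d$. $\iota:X\setminus\{0\}\to X\setminus\{0\}$ satisfies $|\iota x|=1/|x|$, $d(\iota x,\iota y)=d(x,y)/(|x||y|)$ and $\iota\circ\iota=\mathrm{id}$; $\iota(0)=0$. $\mathcal{Z}$ is a discrete additive subgroup with compact quotient, $K=\{x:d(x,0)\le d(x,z)\ \forall z\in\mathcal{Z}\}$ its Dirichlet region with a boundary choice so each $x$ has a unique $[x]\in\mathcal{Z}$ with $x-[x]\in K$; $\operatorname{rad}(K)=\sup_{x\in K}|x|$, and norm-Euclidean means $\operatorname{rad}(K)<1$. $Tx=\iota x-[\iota x]$ ($x\ne0$), $T0=0$. Cylinders: $C_\emptyset=K$, $C_{as}=K\cap\iota(C_s+a)$ for $a\in\mathcal{Z}$; the supremum is over digit strings $s$ of length $m$ (with $\operatorname{diam}\emptyset=0$). *)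

(* Defs.v *)
(* X = R^d is 'rV[R]_d with the Euclidean norm. *)
From mathcomp Require Import all_boot all_order all_algebra.
From mathcomp Require Import all_classical all_reals all_analysis.
Set Implicit Arguments. Unset Strict Implicit. Unset Printing Implicit Defensive.
Import Order.TTheory GRing.Theory Num.Theory.
Local Open Scope classical_set_scope.
Local Open Scope ring_scope.

Definition eucl_norm {R : realType} {d : nat} (x : 'rV[R]_d) : R :=
  Num.sqrt (\sum_(i < d) (x ord0 i) ^+ 2).
Definition eucl_dist {R : realType} {d : nat} (x y : 'rV[R]_d) : R := eucl_norm (x - y).

Definition dirichlet {R : realType} {d : nat} (Z : set 'rV[R]_d) : set 'rV[R]_d :=
  [set x | forall z, Z z -> eucl_dist x 0 <= eucl_dist x z].

Definition rad_of {R : realType} {d : nat} (K : set 'rV[R]_d) : R :=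
  sup [set eucl_norm x | x in K].

Definition diam_of {R : realType} {d : nat} (C : set 'rV[R]_d) : R :=
  if pselect (C = set0) then 0 else sup [set eucl_dist x y | x in C & y in C].

Fixpoint cyl {R : realType} {d : nat} (iota : 'rV[R]_d -> 'rV[R]_d)
  (K : set 'rV[R]_d) (s : seq 'rV[R]_d) : set 'rV[R]_d :=
  match s with
  | [::] => K
  | a :: s' => K `&` (iota @` [set y + a | y in cyl iota K s'])
  end.

Definition sigma_of {R : realType} {d : nat} (iota : 'rV[R]_d -> 'rV[R]_d)
  (Z K : set 'rV[R]_d) (m : nat) : R :=
  sup [set diam_of (cyl iota K s) | s in
        [set s : seq 'rV[R]_d | size s = m /\ (forall a, a \in s -> Z a)]].

(* Main.v *)
From mathcomp Require Import all_boot all_order all_algebra.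
From mathcomp Require Import all_classical all_reals all_analysis.
From mathcomp Require Import ring lra zify.
Require Import Defs.
Import Order.TTheory GRing.Theory Num.Theory.
Set Implicit Arguments. Unset Strict Implicit.
Local Open Scope classical_set_scope.
Local Open Scope ring_scope.

Section Aux.
Variables (R : realType) (d : nat).
Implicit Types x y : 'rV[R]_d.

Definition sq x := \sum_(i < d) (x ord0 i) ^+ 2.
Definition ip x y := \sum_(i < d) (x ord0 i * y ord0 i).

Lemma sq_ge0 x : 0 <= sq x.
Proof. by apply: sumr_ge0 => i _; rewrite sqr_ge0. Qed.

Lemma norm_ge0 x : 0 <= eucl_norm x.
Proof. exact: sqrtr_ge0. Qed.

Lemma norm_sq x : eucl_norm x ^+ 2 = sq x.
Proof. by rewrite /eucl_norm sqr_sqrtr // sq_ge0. Qed.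

Lemma normN x : eucl_norm (- x) = eucl_norm x.
Proof. by rewrite /eucl_norm; congr Num.sqrt; apply: eq_bigr => i _; rewrite mxE sqrrN. Qed.

Lemma norm0 : eucl_norm (0 : 'rV[R]_d) = 0.
Proof. by rewrite /eucl_norm big1 ?sqrtr0 // => i _; rewrite mxE expr0n. Qed.

Lemma sq0 x : eucl_norm x = 0 -> ip x x = 0 -> True.
Proof. by []. Qed.

Lemma ip_le x y : ip x y <= eucl_norm x * eucl_norm y.
Proof.
set a := eucl_norm x; set b := eucl_norm y.
have ha : 0 <= a := norm_ge0 x. have hb : 0 <= b := norm_ge0 y.
have E : \sum_(i < d) (b * x ord0 i - a * y ord0 i) ^+ 2
   = b ^+ 2 * sq x - 2 * a * b * ip x y + a ^+ 2 * sq y.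
  rewrite /sq /ip !mulr_sumr -sumrN -!big_split /=; apply: eq_bigr => i _; ring.
have H0 : 0 <= \sum_(i < d) (b * x ord0 i - a * y ord0 i) ^+ 2.
  by apply: sumr_ge0 => i _; rewrite sqr_ge0.
rewrite E -(norm_sq x) -(norm_sq y) -/a -/b in H0.
have [ab0|abpos] := eqVneq (a * b) 0.
  have zero : forall z : 'rV[R]_d, eucl_norm z = 0 -> forall i, z ord0 i = 0.
    move=> z /eqP; rewrite sqrtr_eq0 => hz i.
    have : sq z == 0 by rewrite eq_le hz sq_ge0.
    move/eqP/psumr_eq0P => /(_ (fun i _ => sqr_ge0 _) i isT) /eqP.
    by rewrite sqrf_eq0 => /eqP.
  rewrite ab0 /ip; move/eqP: ab0; rewrite mulf_eq0 => /orP[] /eqP h.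
    by rewrite big1 // => i _; rewrite (zero _ h) mul0r.
  by rewrite big1 // => i _; rewrite (zero _ h) mulr0.
have abp : 0 < a * b by rewrite lt_def abpos mulr_ge0.
nra.
Qed.

Lemma norm_triangle x y : eucl_norm (x + y) <= eucl_norm x + eucl_norm y.
Proof.
have hs : sq (x + y) = sq x + 2 * ip x y + sq y.
  rewrite /sq /ip mulr_sumr -!big_split /=; apply: eq_bigr => i _; rewrite mxE; ring.
rewrite -[X in _ <= X]ger0_norm ?addr_ge0 ?norm_ge0 // -sqrtr_sqr.
rewrite /eucl_norm -/(sq (x + y)) ler_sqrt ?sqr_ge0 //.
rewrite -/(eucl_norm x) -/(eucl_norm y) hs -(norm_sq x) -(norm_sq y); have := ip_le x y.
have := norm_ge0 x; have := norm_ge0 y. nra.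
Qed.

Lemma dist_le x y : eucl_dist x y <= eucl_norm x + eucl_norm y.
Proof. by rewrite /eucl_dist -(normN y); apply: norm_triangle. Qed.

Lemma diam_bound (C : set 'rV[R]_d) D : 0 <= D ->
  (forall x y, C x -> C y -> eucl_dist x y <= D) -> 0 <= diam_of C /\ diam_of C <= D.
Proof.
move=> D0 HC; rewrite /diam_of; destruct (pselect (C = set0)) as [C1|C0]; first by rewrite lexx D0.
have [x Cx] : C !=set0.
  by apply/set0P; apply/negP => /eqP.
have ub : ubound [set eucl_dist x y | x in C & y in C] D.
  by move=> _ [x1 h1 [x2 h2 <-]]; apply: HC.
have ne : [set eucl_dist x y | x in C & y in C] (eucl_dist x x).
  by exists x => //; exists x.
split; last by apply: ge_sup => //; exists (eucl_dist x x).
have -> : 0 = eucl_dist x x by rewrite /eucl_dist subrr norm0.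
by apply: (sup_upper_bound _ ne); split; [exists (eucl_dist x x) | exists D].
Qed.

End Aux.

Theorem lemma4p5 (R : realType) (d : nat)
  (iota : 'rV[R]_d -> 'rV[R]_d) (Z K : set 'rV[R]_d) (fl : 'rV[R]_d -> 'rV[R]_d)
  (* the inversion iota *)
  (Hiota_norm : forall x, x != 0 -> eucl_norm (iota x) = 1 / eucl_norm x)
  (Hiota_dist : forall x y, x != 0 -> y != 0 ->
      eucl_dist (iota x) (iota y) = eucl_dist x y / (eucl_norm x * eucl_norm y))
  (Hiota_inv : forall x, x != 0 -> iota (iota x) = x)
  (Hiota0 : iota 0 = 0)
  (* Z is an additive subgroup *)
  (HZ0 : Z 0) (HZsub : forall a b, Z a -> Z b -> Z (a - b))
  (* Z is discrete *)
  (HZdisc : exists2 r : R, 0 < r & forall z, Z z -> z != 0 -> r <= eucl_norm z)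
  (* X / Z is compact: Z has a bounded fundamental set *)
  (HZcocpt : exists B : R, forall x, exists2 z, Z z & eucl_dist x z <= B)
  (* K is the Dirichlet region with a boundary choice; fl x = [x] *)
  (HKsub : K `<=` dirichlet Z)
  (Hfl : forall x, Z (fl x) /\ K (x - fl x) /\
            (forall z, Z z -> K (x - z) -> z = fl x))
  (* norm-Euclidean *)
  (HnE : rad_of K < 1) :
  (forall m : nat, (1 <= m)%N -> sigma_of iota Z K m <= 2 * rad_of K ^+ (2 * m + 1)) /\
  (sigma_of iota Z K m @[m --> \oo] --> 0).
Proof.
have distr0 : forall x : 'rV[R]_d, eucl_dist x 0 = eucl_norm x.
  by move=> x; rewrite /eucl_dist subr0.
have dist0l : forall x : 'rV[R]_d, eucl_dist 0 x = eucl_norm x.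
  by move=> x; rewrite /eucl_dist sub0r normN.
have [B HB] := HZcocpt.
have Kbd : forall x, K x -> eucl_norm x <= B.
  move=> x Kx; have [z Zz hz] := HB x.
  have h := HKsub x Kx z Zz; rewrite -distr0; exact: le_trans h hz.
have K0 : K (0 - fl 0) by have [_ []] := Hfl 0.
set r := rad_of K.
have hsup : has_sup [set eucl_norm x | x in K].
  split; first by exists (eucl_norm (0 - fl 0)), (0 - fl 0).
  by exists B => _ [x Kx <-]; apply: Kbd.
have Kr : forall x, K x -> eucl_norm x <= r.
  by move=> x Kx; apply: (sup_upper_bound hsup); exists x.
have r0 : 0 <= r by apply: le_trans (Kr _ K0); apply: norm_ge0.
have cylK : forall s, cyl iota K s `<=` K by case=> [|a s] //= x [].
have key : forall s x1 x2, cyl iota K s x1 -> cyl iota K s x2 ->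
    eucl_dist x1 x2 <= 2 * r ^+ (2 * size s + 1).
  elim=> [|a s IH] x1 x2.
    move=> /= K1 K2; rewrite muln0 add0n expr1.
    by have := dist_le x1 x2; have := Kr _ K1; have := Kr _ K2; lra.
  move=> [K1 [u1 [y1 Hy1 Eu1] Ex1]] [K2 [u2 [y2 Hy2 Eu2] Ex2]].
  have E : r ^+ (2 * (size (a :: s)) + 1) = r ^+ (2 * size s + 1) * r * r.
    by rewrite -mulrA -expr2 -exprD; congr (_ ^+ _); rewrite /=; lia.
  rewrite E; set t := r ^+ (2 * size s + 1).
  have t0 : 0 <= t by apply: exprn_ge0.
  have IH12 := IH _ _ Hy1 Hy2; have IH21 := IH _ _ Hy2 Hy1.
  have hx1 := Kr _ K1; have hx2 := Kr _ K2.
  have zero_case : forall y y' u' x', cyl iota K s y -> cyl iota K s y' ->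
      y + a = 0 -> y' + a = u' -> iota u' = x' -> eucl_norm x' <= r ->
      eucl_norm x' <= 2 * (t * r * r).
    move=> y y' u' x' Hy Hy' Eu Eu' Ex' hx'.
    have ha : a = - y by rewrite -[a](addKr y) Eu addr0.
    have ht := IH _ _ Hy' Hy; rewrite -/t in ht.
    have [u'0|u'n0] := eqVneq u' 0.
      rewrite -Ex' u'0 Hiota0 norm0; have := mulr_ge0 (mulr_ge0 t0 r0) r0; lra.
    have hn := Hiota_norm _ u'n0; rewrite Ex' in hn.
    have nu : eucl_norm u' <= 2 * t by rewrite -Eu' ha; apply: ht.
    have nu0 := norm_ge0 u'.
    have [nz|nnz] := eqVneq (eucl_norm u') 0.
      rewrite hn nz div1r invr0; have := mulr_ge0 (mulr_ge0 t0 r0) r0; lra.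
    have prod : eucl_norm x' * eucl_norm u' = 1 by rewrite hn div1r mulVf.
    have xn0 := norm_ge0 x'.
    have h1 : eucl_norm x' * eucl_norm u' <= r * (2 * t) by exact: ler_pM (norm_ge0 _) (norm_ge0 _) hx' nu.
    rewrite prod in h1.
    nra.
  have [u10|u1n0] := eqVneq u1 0.
    have x10 : x1 = 0 by rewrite -Ex1 u10.
    rewrite x10 dist0l; apply: (zero_case y1 y2 u2) => //; by rewrite Eu1.
  have [u20|u2n0] := eqVneq u2 0.
    have x20 : x2 = 0 by rewrite -Ex2 u20.
    rewrite x20 distr0; apply: (zero_case y2 y1 u1) => //; by rewrite Eu2.
  rewrite -Ex1 -Ex2 Hiota_dist //.
  have hn1 := Hiota_norm _ u1n0; have hn2 := Hiota_norm _ u2n0.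
  rewrite Ex1 in hn1; rewrite Ex2 in hn2.
  have du : eucl_dist u1 u2 = eucl_dist y1 y2.
    by rewrite /eucl_dist -Eu1 -Eu2 opprD addrACA subrr addr0.
  have e : eucl_dist y1 y2 / (eucl_norm u1 * eucl_norm u2)
      = eucl_dist y1 y2 * (1 / eucl_norm u1) * (1 / eucl_norm u2).
    by rewrite invfM !div1r mulrA.
  rewrite du e -hn1 -hn2; rewrite -/t in IH12.
  have g0 : 0 <= eucl_dist y1 y2 by apply: norm_ge0.
  have g1 := norm_ge0 x1; have g2 := norm_ge0 x2.
  have h1 : eucl_dist y1 y2 * eucl_norm x1 <= 2 * t * r by apply: ler_pM.
  have h2 : eucl_dist y1 y2 * eucl_norm x1 * eucl_norm x2 <= 2 * t * r * r.
    by apply: ler_pM => //; apply: mulr_ge0.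
  by rewrite !mulrA.
have sig : forall m, 0 <= sigma_of iota Z K m /\ sigma_of iota Z K m <= 2 * r ^+ (2 * m + 1).
  move=> m; rewrite /sigma_of.
  have D0 : 0 <= 2 * r ^+ (2 * m + 1) by apply: mulr_ge0 => //; apply: exprn_ge0.
  set S := [set diam_of (cyl iota K s) | s in _].
  have ub : ubound S (2 * r ^+ (2 * m + 1)).
    move=> _ [s [sz _] <-]; rewrite -sz.
    by have [] := diam_bound (D := 2 * r ^+ (2 * size s + 1)) _ (key s); rewrite ?sz.
  have s0 : S (diam_of (cyl iota K (nseq m 0))).
    exists (nseq m 0) => //; split; first by rewrite size_nseq.
    by move=> a; rewrite mem_nseq => /andP[_ /eqP->].
  split; last by apply: ge_sup => //; exists (diam_of (cyl iota K (nseq m 0))).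
  have hs : has_sup S by split; [exists (diam_of (cyl iota K (nseq m 0))) | exists (2 * r ^+ (2 * m + 1))].
  have h := sup_upper_bound hs s0.
  have [] := diam_bound (D := 2 * r ^+ (2 * size (nseq m (0 : 'rV[R]_d)) + 1)) _ (key (nseq m 0)).
    by apply: mulr_ge0 => //; apply: exprn_ge0.
  by move=> h0 _; lra.
split; first by move=> m _; have [] := sig m.
have lim2 : (fun m => 2 * r ^+ m) @ \oo --> 0.
  rewrite -(mulr0 2); apply: cvgMl_tmp; apply: cvg_expr.
  by rewrite ger0_norm.
have lim0 : (fun m => 0 * (2 * r ^+ m)) @ \oo --> 0.
  by rewrite -[X in _ --> X](mulr0 0); apply: cvgMl_tmp.
apply: (squeeze_cvgr _ lim0 lim2).
near=> m; rewrite mul0r; have [h0 h1] := sig m; apply/andP; split => //.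
  apply: le_trans h1 _.
  apply: ler_pM => //; first by apply: exprn_ge0.
  apply: ler_wiXn2l => //; first by apply: ltW.
  lia.
Unshelve. all: by end_near.
Qed.
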